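(* Assume the standing hypothesis (H) below. Then for every $K>0$ there exists a constant $C_K>0$ such that for all $w_1,w_2\in W$ with $\max\{|w_1|_W,|w_2|_W\}\le K$, $$d_H(Z(w_1),Z(w_2))\le C_K|w_1-w_2|_W,$$ where $d_H(A,B)=\max\{\sup_{z\in A}\mathrm{dist}(z,B),\sup_{z'\in B}\mathrm{dist}(z',A)\}$ is the Hausdorff distance.
   Context: $X$ is a real Hilbert space with inner product $\langle\cdot,\cdot\rangle$ and norm $|x|=\sqrt{\langle x,x\rangle}$; $W$ is a real Banach space with norm $|\cdot|_W$. $G:X\times W\to[0,\infty)$ is locally Lipschitz continuous and $Z(w):=\{x\in X: G(x,w)\le 1\}$; $\partial Z(w)$ is its boundary and $\mathrm{dist}(x,S)=\inf_{s\in S}|x-s|$. The partial gradient $\nabla_xG(x,w)\in X$ is defined by $\langle\nabla_xG(x,w),y\rangle=\lim_{t\to0}\frac1t(G(x+ty,w)-G(x,w))$ for all $y\in X$. Hypothesis (H): $\nabla_xG(x,w)$ exists for all $x\in X$, $w\in W$, and there are positive constants $\lambda,c,L$ and functions $\mu_1:W\times[0,\infty)\to[0,\infty)$, $\mu_2:[0,\infty)\to[0,\infty)$ with $\mu_1(w,0)=\mu_2(0)=0$, $\lim_{s\to\infty}\mu_1(w,s)=\lim_{s\to\infty}\mu_2(s)=\infty$ for every $w$, such that for all $x,y,z\in X$, $w,w'\in W$: (i) $G(x,w)=1\Rightarrow|\nabla_xG(x,w)|\ge c$; (ii) $|\nabla_xG(x,w)-\nabla_xG(y,w)|\le\mu_1(w,|x-y|)$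 if $x,y\in Z(w)$; (iii) $\langle\nabla_xG(x,w)-\nabla_xG(z,w),x-z\rangle\ge-\lambda|x-z|^2$ if $x\in\partial Z(w)$, $z\in Z(w)$; (iv) $|G(x,w)-G(x,w')|\le L|w-w'|_W$; (v) for every $\rho>0$, $\mathrm{dist}(x,Z(w))\ge\rho\Rightarrow G(x,w)-1\ge\mu_2(\rho)$. *)

(* Defs.v *)
From HB Require Import structures.
From mathcomp Require Import all_boot all_order all_algebra.
From mathcomp Require Import all_classical all_reals all_analysis.
Set Implicit Arguments. Unset Strict Implicit. Unset Printing Implicit Defensive.
Import Order.TTheory GRing.Theory Num.Theory.
Import numFieldNormedType.Exports.
Local Open Scope classical_set_scope.
Local Open Scope ring_scope.

(* ip is an inner product on the normed space X inducing its norm: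
   symmetric, linear in the first argument, and <x,x> = |x|^2.
   Together with completeness of X this makes X a real Hilbert space. *)
Definition is_inner_product (R : realType) (X : normedModType R)
  (ip : X -> X -> R) : Prop :=
  [/\ (forall x y, ip x y = ip y x),
      (forall (a : R) x y z, ip (a *: x + y) z = a * ip x z + ip y z)
    & (forall x, ip x x = `|x| ^+ 2)].

(* dist(x, S) = inf_{s in S} |x - s|  (= +oo when S is empty) *)
Definition dist (R : realType) (X : normedModType R) (x : X) (S : set X)
  : \bar R := ereal_inf [set (`|x - s|)%:E | s in S].

Definition hausdorff_dist (R : realType) (X : normedModType R) (A B : set X)
  : \bar R :=
  Order.max (ereal_sup [set dist z B | z in A])
            (ereal_sup [set dist z A | z in B]).

Definition boundary (R : realType) (X : normedModType R) (A : set X) : set X :=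
  closure A `\` interior A.

Definition is_partial_grad (R : realType) (X W : normedModType R)
  (ip : X -> X -> R) (G : X -> W -> R) (x : X) (w : W) (g : X) : Prop :=
  forall y : X,
    (fun t : R => t^-1 * (G (x + t *: y) w - G x w)) @ 0^' --> ip g y.

Definition locally_lipschitz2 (R : realType) (X W : normedModType R)
  (G : X -> W -> R) : Prop :=
  forall (x0 : X) (w0 : W), exists r : R, exists M : R, 0 < r /\
    forall x1 x2 w1 w2, `|x1 - x0| < r -> `|x2 - x0| < r ->
      `|w1 - w0| < r -> `|w2 - w0| < r ->
      `|G x1 w1 - G x2 w2| <= M * (`|x1 - x2| + `|w1 - w2|).

(* Main.v *)
Require Import Defs.
From HB Require Import structures.
From mathcomp Require Import all_boot all_order all_algebra.
From mathcomp Require Import all_classical all_reals all_analysis.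
From mathcomp Require Import ring lra.
Import Order.TTheory GRing.Theory Num.Theory.
Import numFieldNormedType.Exports.
Local Open Scope classical_set_scope.
Local Open Scope ring_scope.
Lemma cauchy_lim (R : realType) (X : completeNormedModType R) (y : nat -> X) :
  (forall e, 0 < e -> exists N, forall j, (N <= j)%N -> `|y j - y N| < e) ->
  exists Y : X, y n @[n --> \oo] --> Y.
Proof.
move=> H; apply/cvg_ex; apply: cauchy_cvg; apply: cauchy_exP => e e0.
have [N HN] := H e e0; exists (y N); exists N => // j /= Nj.
by rewrite -ball_normE /ball_ /= distrC; apply: HN.
Qed.

Lemma chain (R : realType) (X : completeNormedModType R) (P : R -> X -> Prop)
  (k : R) (z : X) :
  0 <= k -> P 0 z ->
  (forall t y, 0 <= t -> t < 1 -> P t y -> exists2 h0, 0 < h0 &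
     forall h, 0 < h -> h < h0 -> exists y', P (t + h) y' /\ `|y' - y| <= k * h) ->
  (forall t y, (forall e, 0 < e -> exists t', exists y',
      [/\ t - e < t', t' <= t, `|y - y'| < e & P t' y']) -> P t y) ->
  exists y, P 1 y /\ `|y - z| <= k.
Proof.
move=> k0 Pz step clo.
pose Good (p : R * X) := [/\ 0 <= p.1, p.1 <= 1 & P p.1 p.2].
pose prec (p q : R * X) := p.1 <= q.1 /\ `|q.2 - p.2| <= k * (q.1 - p.1).
have prec_trans : forall p q r, prec p q -> prec q r -> prec p r.
  move=> p q r [pq1 pq2] [qr1 qr2]; split; first exact: le_trans pq1 qr1.
  rewrite (_ : r.2 - p.2 = (r.2 - q.2) + (q.2 - p.2)); last by rewrite addrA subrK.
  apply: le_trans (ler_normD _ _) _.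
  rewrite (_ : r.1 - p.1 = (r.1 - q.1) + (q.1 - p.1)); last by rewrite addrA subrK.
  by rewrite mulrDr lerD.
have prec_refl : forall p, prec p p by move=> p; split; rewrite // !subrr normr0 mulr0.
pose S p := [set q.1 | q in [set q | Good q /\ prec p q]].
have hsS : forall p, Good p -> has_sup (S p).
  move=> p Gp; split; first by exists p.1; exists p.
  by exists 1 => _ [q [[_ ? _] _] <-].
pose m p := sup (S p).
have next_ex : forall p, exists q, Good p -> [/\ Good q, prec p q & (p.1 + m p)/2 <= q.1].
  move=> p; case: (pselect (Good p)) => Gp; last by exists p.
  case: (ltrP p.1 (m p)) => hm.
  - have e0 : 0 < (m p - p.1) / 2 by rewrite divr_gt0 // subr_gt0.
    have [_ [q [Gq pq] <-] hq] := sup_adherent e0 (hsS p Gp).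
    exists q => _; split => //. move: hq; rewrite /m; move: (sup _) p.1 q.1 => s a b; lra.
  - by exists p => _; split => //; lra.
case: (choice next_ex) => nx Hnx.
pose seqp n := iter n nx (0, z).
have G0 : Good (0, z) by split => //=; lra.
have Gs : forall n, Good (seqp n).
  by elim => // n IH; rewrite /seqp iterS; case: (Hnx _ IH).
have precS : forall n, prec (seqp n) (seqp n.+1).
  by move=> n; case: (Hnx _ (Gs n)).
have precD : forall n d, prec (seqp n) (seqp (n + d)%N).
  move=> n; elim => [|d IH]; first by rewrite addn0 //.
  by rewrite addnS; apply: prec_trans IH (precS _).
pose t n := (seqp n).1.
pose y n := (seqp n).2.
have tmono : forall n j, (n <= j)%N -> t n <= t j.
  by move=> n j /subnKC <-; case: (precD n (j - n)%N).
have hsT : has_sup (range t).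
  split; first by exists (t 0%N); exists 0%N.
  by exists 1 => _ [n _ <-]; case: (Gs n).
pose T := sup (range t).
have tT : forall n, t n <= T by move=> n; apply: sup_upper_bound => //; exists n.
have T1 : T <= 1.
  by apply: ge_sup; [exists (t 0%N); exists 0%N | move=> _ [n _ <-]; case: (Gs n)].
have T0 : 0 <= T by apply: le_trans (tT 0%N); case: (Gs 0%N).
have nearT : forall e, 0 < e -> exists N, forall n, (N <= n)%N -> T - e < t n.
  move=> e e0; have [_ [N _ <-] hN] := sup_adherent e0 hsT.
  by exists N => n Nn; apply: lt_le_trans hN (tmono _ _ Nn).
have [Y HY] : exists Y : X, y n @[n --> \oo] --> Y.
  apply: cauchy_lim => e e0.
  have e1 : 0 < e / (k + 1) by rewrite divr_gt0 // ltr_wpDl.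
  have [N HN] := nearT _ e1; exists N => j Nj.
  case: (precD N (j - N)%N); rewrite subnKC // => _ hj.
  apply: le_lt_trans hj _.
  have := HN j Nj; have := tT j; have := tT N; have := HN N (leqnn N).
  have ke : (k + 1) * (e / (k + 1)) = e by rewrite mulrC divfK // gt_eqF // ltr_wpDl.
  rewrite /t /y; move: (e / (k+1)) ke => a ke.
  move: (seqp j).1 (seqp N).1 => tj tN *; nra.
have HYn : forall e, 0 < e -> exists N, forall j, (N <= j)%N -> `|Y - y j| < e.
  move=> e e0; have := (cvgrPdist_lt _ _).1 HY e e0.
  by case => N _ HN; exists N => j Nj; apply: HN.
have precY : forall n, prec (seqp n) (T, Y).
  move=> n; split; first exact: tT.
  apply/ler_addgt0Pr => e e0; have [N HN] := HYn e e0.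
  pose j := maxn n N.
  case: (precD n (j - n)%N); rewrite subnKC ?leq_maxl // => _ hj.
  have hY := HN j (leq_maxr _ _).
  rewrite /=; apply: le_trans (_ : `|Y - y j| + `|y j - y n| <= _).
    by rewrite (_ : Y - (seqp n).2 = (Y - y j) + (y j - y n)) ?ler_normD // addrA subrK.
  have := tT j; rewrite /t /y in hY hj *; move: (seqp j).1 (seqp n).1 hj hY => tj tn hj hY htj.
  nra.
have GY : Good (T, Y).
  split => //=; apply: clo => e e0.
  have [N1 H1] := HYn e e0; have [N2 H2] := nearT e e0.
  pose j := maxn N1 N2; exists (t j), (y j); split.
  - exact: H2 (leq_maxr _ _).
  - exact: tT.
  - exact: H1 (leq_maxl _ _).
  - by case: (Gs j).
have T1e : T = 1.
  apply/eqP; rewrite eq_le T1 /= leNgt; apply/negP => hT.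
  case: GY => _ _ PY.
  have [h0 h00 Hh] := step T Y T0 hT PY.
  pose h := Num.min (h0 / 2) (1 - T).
  have h0' : 0 < h by rewrite lt_min divr_gt0 //= subr_gt0.
  have hh0 : h < h0 by rewrite /h gt_min ltr_pdivrMr // ltr_pMr // ltr1n.
  have hT1 : h <= 1 - T by rewrite /h ge_min lexx orbT.
  have [y' [Py' hy']] := Hh h h0' hh0.
  have [N HN] := nearT h h0'.
  have Gq : Good (T + h, y') by split => //=; lra.
  have pq : prec (seqp N) (T + h, y').
    apply: prec_trans (precY N) _; split => /=; first lra.
    by rewrite (_ : T + h - T = h) // addrC addKr.
  have hm : T + h <= m (seqp N).
    apply: sup_upper_bound; first exact: hsS.
    by exists (T + h, y').
  case: (Hnx _ (Gs N)) => _ _ hn.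
  have := tT N.+1; have := HN N (leqnn N).
  rewrite /t /seqp iterS in hn *; move: hn hm; rewrite /m.
  move: (sup _) (iter N nx (0, z)).1 (nx (iter N nx (0, z))).1 => a b d; lra.
exists Y; split; first by case: GY; rewrite T1e.
by case: (precY 0%N); rewrite T1e /= subr0 mulr1.
Qed.

Lemma ext (R : realType) (f : R -> R) (l z : R) : f x @[x --> 0^'] --> l -> l < z ->
  exists2 e, 0 < e & forall s, `|s| < e -> s != 0 -> f s < z.
Proof.
move=> H lz.
have H2 : \forall t \near 0^', f t < z by apply: cvgr_lt; eassumption.
have := (@nbhs_norm0P _ R _).1 H2. move=> [e /= e0 He]; exists e => // s hs s0.
Qed.

Theorem lemma2p2 (R : realType) (X W : completeNormedModType R)
  (ip : X -> X -> R) (G : X -> W -> R) (gradG : X -> W -> X)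
  (lambda c L : R) (mu1 : W -> R -> R) (mu2 : R -> R) :
  is_inner_product ip ->
  (forall x w, 0 <= G x w) ->
  locally_lipschitz2 G ->
  (forall x w, is_partial_grad ip G x w (gradG x w)) ->
  0 < lambda -> 0 < c -> 0 < L ->
  (forall w s, 0 <= s -> 0 <= mu1 w s) ->
  (forall s, 0 <= s -> 0 <= mu2 s) ->
  (forall w, mu1 w 0 = 0) -> mu2 0 = 0 ->
  (forall w, mu1 w s @[s --> +oo] --> +oo) ->
  mu2 s @[s --> +oo] --> +oo ->
  let Z := fun w : W => [set x : X | G x w <= 1] in
  (* (i) *)
  (forall x w, G x w = 1 -> c <= `|gradG x w|) ->
  (* (ii) *)
  (forall w x y, Z w x -> Z w y ->
     `|gradG x w - gradG y w| <= mu1 w `|x - y|) ->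
  (* (iii) *)
  (forall w x z, boundary (Z w) x -> Z w z ->
     - lambda * `|x - z| ^+ 2 <= ip (gradG x w - gradG z w) (x - z)) ->
  (* (iv) *)
  (forall x w w', `|G x w - G x w'| <= L * `|w - w'|) ->
  (* (v) *)
  (forall (rho : R) x w, 0 < rho -> (rho%:E <= dist x (Z w))%E ->
     mu2 rho <= G x w - 1) ->
  forall K : R, 0 < K -> exists CK : R, 0 < CK /\
    forall w1 w2 : W, Num.max `|w1| `|w2| <= K ->
      (hausdorff_dist (Z w1) (Z w2) <= (CK * `|w1 - w2|)%:E)%E.
Proof.
move=> hip G0 Glip hgrad lam0 c0 L0 _ _ _ _ _ _ Z hi _ _ hiv _ K K0.
have CK0 : 0 < 2 * L / c by rewrite divr_gt0 // mulr_gt0.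
have main : forall w1 w2 z, G z w1 <= 1 ->
    exists y, G y w2 <= 1 /\ `|z - y| <= 2 * L / c * `|w1 - w2|.
  move=> w1 w2 z Gz.
  case: (eqVneq w1 w2) => [<-|hne]; first by exists z; split => //; rewrite !subrr !normr0 mulr0.
  pose d := w2 - w1.
  have d0 : 0 < `|d| by rewrite normr_gt0 subr_eq0 eq_sym.
  have dd : `|w1 - w2| = `|d| by rewrite distrC.
  rewrite dd.
  pose wt t := w1 + t *: d.
  have wtD : forall t s, wt t - wt s = (t - s) *: d.
    by move=> t s; rewrite /wt opprD addrACA subrr add0r scalerBl.
  pose k := 2 * L / c * `|d|.
  have k0 : 0 < k by rewrite /k mulr_gt0.
  have kc : c / 2 * k = L * `|d|.
    rewrite /k; field; exact: lt0r_neq0.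
  have [y [Gy hy]] : exists y, G y (wt 1) <= 1 /\ `|y - z| <= k.
    apply: (@chain R X (fun t y => G y (wt t) <= 1) k z (ltW k0)).
  - by rewrite /wt scale0r addr0.
  - move=> t y t0 t1 Py.
    have wstep : forall h, 0 <= h -> forall x,
        G x (wt (t + h)) <= G x (wt t) + L * (h * `|d|).
      move=> h h0 x; have := hiv x (wt (t + h)) (wt t).
      rewrite wtD addrAC subrr add0r normrZ ger0_norm // => H.
      have := ler_norm (G x (wt (t + h)) - G x (wt t)); lra.
    case: (ltrP (G y (wt t)) 1) => hG.
    + exists ((1 - G y (wt t)) / (L * `|d|)).
        by rewrite divr_gt0 ?subr_gt0 ?mulr_gt0.
      move=> h h0 hh; exists y; split; last by rewrite subrr normr0 mulr_ge0 // ltW.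
      apply: le_trans (wstep h (ltW h0) y) _.
      move: hh; rewrite ltr_pdivlMr ?mulr_gt0 // => hh; nra.
    + have Gy1 : G y (wt t) = 1 by apply/eqP; rewrite eq_le Py hG.
      set g := gradG y (wt t).
      have gc : c <= `|g| := hi _ _ Gy1.
      have g0 : 0 < `|g| := lt_le_trans c0 gc.
      pose v := - (`|g|^-1) *: g.
      have ipv : ip g v = - `|g|.
        case: hip => hs hl hn.
        have ip0 : ip 0 g = 0.
          by have := hl 1 0 0 g; rewrite scaler0 addr0 mul1r => H; lra.
        rewrite hs -[v]addr0 hl ip0 addr0 hn expr2 mulrA mulNr mulVf ?mul1r //.
          by rewrite mulN1r. exact: lt0r_neq0.
      have vn : `|v| = 1.
        by rewrite normrZ normrN normfV normr_id mulVf // lt0r_neq0.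
      have [e e0 He] := @ext R _ _ (- (c / 2)) (hgrad y (wt t) v) ltac:(rewrite ipv; lra).
      exists (e / k); first by rewrite divr_gt0.
      move=> h h0 hh.
      pose s := k * h.
      have s0 : 0 < s by rewrite mulr_gt0.
      have se : s < e by move: hh; rewrite ltr_pdivlMr // mulrC.
      exists (y + s *: v); split.
      * apply: le_trans (wstep h (ltW h0) _) _.
        have := He s ltac:(by rewrite ger0_norm // ltW) (lt0r_neq0 s0).
        rewrite /= Gy1 mulrC ltr_pdivrMr // => H.
        have cs : c / 2 * s = L * (h * `|d|) by rewrite /s mulrA kc; ring.
        lra.
      * by rewrite addrAC subrr add0r normrZ vn mulr1 ger0_norm // ltW.
  - move=> t y Hc /=.
    have [r [M [r0 HL]]] := Glip y (wt t).
    apply/ler_addgt0Pr => e e0.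
    pose Q := `|M| + L * `|d| + 1.
    have Q0 : 0 < Q by rewrite /Q ltr_wpDl // addr_ge0 // mulr_ge0 // ltW.
    pose a := Num.min r (e / Q).
    have a0 : 0 < a by rewrite lt_min r0 divr_gt0.
    have ar : a <= r by rewrite ge_min lexx.
    have aQ : a * Q <= e.
      by rewrite -ler_pdivlMr // ge_min lexx orbT.
    have [t' [y' [ht1 ht2 hy hP]]] := Hc a a0.
    have H1 := HL y y' (wt t) (wt t).
    rewrite !subrr !normr0 addr0 in H1.
    have {}H1 := H1 r0 ltac:(by rewrite distrC; apply: lt_le_trans hy ar) r0 r0.
    have H2 := hiv y' (wt t) (wt t').
    rewrite wtD normrZ ger0_norm ?subr_ge0 // in H2.
    have h3 : M * `|y - y'| <= `|M| * a.
      apply: le_trans (_ : `|M| * `|y - y'| <= _).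
        by apply: ler_wpM2r => //; apply: ler_norm.
      by apply: ler_wpM2l => //; apply: ltW.
    have h4 : L * ((t - t') * `|d|) <= L * (a * `|d|).
      by apply: ler_wpM2l; [apply: ltW | apply: ler_wpM2r => //; lra].
    have h5 := ler_norm (G y (wt t) - G y' (wt t)).
    have h6 := ler_norm (G y' (wt t) - G y' (wt t')).
    have h7 : a * Q = `|M| * a + L * (a * `|d|) + a by rewrite /Q; ring.
    lra.
  by exists y; split;
      [move: Gy; rewrite /wt scale1r /d addrC subrK | rewrite distrC].
exists (2 * L / c); split => // w1 w2 _.
rewrite /hausdorff_dist ge_max; apply/andP; split; apply: ge_ereal_sup => _ [z Zz <-].
- have [y [Zy hy]] := main w1 w2 z Zz.
  apply: le_trans (ereal_inf_lbound _) _; first by exists y.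
  by rewrite lee_fin.
- have [y [Zy hy]] := main w2 w1 z Zz.
  apply: le_trans (ereal_inf_lbound _) _; first by exists y.
  by rewrite lee_fin (distrC w1).
Qed.
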